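(* Let $\mathbb{P}$ be the set of primes and $(-)^d=\operatorname{Hom}_{\mathbb{Z}}(-,\prod_{p\in\mathbb{P}}\mathbb{Z}(p^\infty))$ on abelian groups. Let $M=\langle \tfrac1p \mid p\in\mathbb{P}\rangle\le\mathbb{Q}$ and let $0\to F_{-1}\xrightarrow{\zeta}F_0\to M\to 0$ be a free resolution of $M$. Then $M^d\cong\prod_{p\in\mathbb{P}}\mathbb{Z}(p^\infty)$, $M^d$ is cosilting with respect to $\zeta^d:F_0^d\to F_{-1}^d$, but $M$ is not partial silting (with respect to any projective presentation), since $\operatorname{Ext}^1_{\mathbb{Z}}(M,M)\neq 0$.
   Context: $\mathbb{Z}(p^\infty)$ is the Prüfer $p$-group. For a homomorphism $\zeta:Q_0\to Q_1$, $\mathcal{B}_\zeta=\{X \mid \operatorname{Hom}(X,\zeta)\text{ is an epimorphism}\}$; a module $T$ with injective copresentation $0\to T\to Q_0\xrightarrow{\zeta}Q_1$ ($Q_0,Q_1$ injective) is cosilting with respect to $\zeta$ if $\operatorname{Cogen}(T)=\mathcal{B}_\zeta$, with $\operatorname{Cogen}(T)$ the class of modules embeddable in a direct product of copies of $T$. For $\sigma:P_1\to P_0$ a projective presentation of $M$, $\mathcal{D}_\sigma=\{Y\mid\operatorname{Hom}(\sigma,Y)\text{ is an epimorphism}\}$, and $M$ is partial silting with respect to $\sigma$ if $M\in\mathcal{D}_\sigma$ and $\mathcal{D}_\sigma$ is closed under direct sums. *)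

(* Defs.v *)
From HB Require Import structures.
From mathcomp Require Import all_boot all_order all_algebra.
From mathcomp Require Import boolp classical_sets functions.
Set Implicit Arguments. Unset Strict Implicit. Unset Printing Implicit Defensive.
Import Order.TTheory GRing.Theory Num.Theory.
Local Open Scope ring_scope.

Record zclosed (V : zmodType) (P : V -> Prop) : Prop := ZClosed {
  zcl0 : P 0; zclB : forall x y, P x -> P y -> P (x - y) }.

Record subg (V : zmodType) (P : V -> Prop) (h : zclosed P) : Type :=
  SubG { sgval : V; sgprop : P sgval }.

HB.instance Definition _ (V : zmodType) (P : V -> Prop) (h : zclosed P) :=
  gen_eqMixin (subg h).
HB.instance Definition _ (V : zmodType) (P : V -> Prop) (h : zclosed P) :=
  gen_choiceMixin (subg h).

Lemma subg_inj (V : zmodType) (P : V -> Prop) (h : zclosed P) (x y : subg h) :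
  sgval x = sgval y -> x = y.
Proof.
case: x y => x px [y py] /= exy; subst y; congr SubG; exact: Prop_irrelevance.
Qed.

Definition subg0 (V : zmodType) (P : V -> Prop) (h : zclosed P) : subg h :=
  SubG h (zcl0 h).
Lemma zclN (V : zmodType) (P : V -> Prop) (h : zclosed P) x : P x -> P (- x).
Proof. by move=> px; rewrite -sub0r; apply: zclB => //; exact: zcl0. Qed.
Lemma zclD (V : zmodType) (P : V -> Prop) (h : zclosed P) x y :
  P x -> P y -> P (x + y).
Proof. by move=> px py; rewrite -[y]opprK; apply: zclB => //; exact: zclN. Qed.
Definition subgN (V : zmodType) (P : V -> Prop) (h : zclosed P) (x : subg h) :
  subg h := SubG h (zclN h (sgprop x)).
Definition subgD (V : zmodType) (P : V -> Prop) (h : zclosed P) (x y : subg h) :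
  subg h := SubG h (zclD h (sgprop x) (sgprop y)).

Lemma subgDA (V : zmodType) (P : V -> Prop) (h : zclosed P) :
  associative (@subgD V P h).
Proof. by move=> x y z; apply: subg_inj; rewrite /= addrA. Qed.
Lemma subgDC (V : zmodType) (P : V -> Prop) (h : zclosed P) :
  commutative (@subgD V P h).
Proof. by move=> x y; apply: subg_inj; rewrite /= addrC. Qed.
Lemma subg0D (V : zmodType) (P : V -> Prop) (h : zclosed P) :
  left_id (subg0 h) (@subgD V P h).
Proof. by move=> x; apply: subg_inj; rewrite /= add0r. Qed.
Lemma subgND (V : zmodType) (P : V -> Prop) (h : zclosed P) :
  left_inverse (subg0 h) (@subgN V P h) (@subgD V P h).
Proof. by move=> x; apply: subg_inj; rewrite /= addNr. Qed.

HB.instance Definition _ (V : zmodType) (P : V -> Prop) (h : zclosed P) :=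
  GRing.isZmodule.Build (subg h) (@subgDA V P h) (@subgDC V P h)
    (@subg0D V P h) (@subgND V P h).

Lemma hom_closed (A B : zmodType) :
  zclosed (fun f : A -> B => GRing.zmod_morphism f).
Proof.
split; first by move=> x y /=; rewrite subr0.
move=> f g hf hg x y.
have E : forall z, (f - g) z = f z - g z by [].
by rewrite !E hf hg !opprD addrACA.
Qed.

Definition Hom (A B : zmodType) : zmodType := subg (hom_closed A B).

(* ---------- Q/Z, represented by the rationals in [0,1) ---------- *)
Definition frac (x : rat) : rat := x - (Num.floor x)%:~R.

Lemma frac_range x : 0 <= frac x < 1.
Proof.
rewrite /frac subr_ge0 floor_le /= ltrBlDr.
by have := floorD1_gt x; rewrite intrD addrC.
Qed.

Lemma fracDz x (n : int) : frac (x + n%:~R) = frac x.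
Proof.
rewrite /frac floorDrz ?intr_int // intrKfloor intrD opprD addrA.
by rewrite addrAC addrK.
Qed.

Lemma frac_id x : 0 <= x < 1 -> frac x = x.
Proof.
move=> /andP[x0 x1]; rewrite /frac (@floor_def _ x 0) ?subr0 //.
by rewrite x0 add0r.
Qed.

Lemma fracDl x y : frac (frac x + y) = frac (x + y).
Proof.
have -> : frac x + y = (x + y) + (- Num.floor x)%:~R.
  by rewrite /frac intrN addrAC.
by rewrite fracDz.
Qed.

Record qz : Type := QZ { qval : rat; qprop : 0 <= qval < 1 }.
HB.instance Definition _ := gen_eqMixin qz.
HB.instance Definition _ := gen_choiceMixin qz.

Lemma qz_inj (x y : qz) : qval x = qval y -> x = y.
Proof.
case: x y => x px [y py] /= exy; subst y; congr QZ; exact: Prop_irrelevance.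
Qed.

Definition qz0 : qz := @QZ 0 (introT andP (conj (lexx 0) ltr01)).
Definition qzN (x : qz) : qz := QZ (frac_range (- qval x)).
Definition qzD (x y : qz) : qz := QZ (frac_range (qval x + qval y)).

Lemma qzDA : associative qzD.
Proof.
move=> x y z; apply: qz_inj => /=.
by rewrite [in LHS]addrC !fracDl addrC addrA.
Qed.
Lemma qzDC : commutative qzD.
Proof. by move=> x y; apply: qz_inj; rewrite /= addrC. Qed.
Lemma qz0D : left_id qz0 qzD.
Proof. by move=> x; apply: qz_inj; rewrite /= add0r frac_id // qprop. Qed.
Lemma qzND : left_inverse qz0 qzN qzD.
Proof.
move=> x; apply: qz_inj => /=; by rewrite fracDl addNr frac_id // lexx ltr01.
Qed.

HB.instance Definition _ := GRing.isZmodule.Build qz qzDA qzDC qz0D qzND.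

Definition in_pruefer (p : nat) (x : qz) : Prop :=
  exists k : nat, qval x * (p ^ k)%:R \is a Num.int.

Lemma frac_int x : (x - frac x) \is a Num.int.
Proof. by rewrite /frac opprB addrC subrK intr_int. Qed.

Lemma pruefer_closed (p : nat) : zclosed (in_pruefer p).
Proof.
split; first by exists 0%N; rewrite /= mul0r int_num0.
move=> x y [a ha] [b hb]; exists (a + b)%N.
have -> : qval (x - y) = frac (qval x - qval y).
  by rewrite /= addrC fracDl addrC.
set u := qval x - qval y.
have -> : frac u = u - (u - frac u) by rewrite opprB addrC subrK.
have nat_int : forall n : nat, (n%:R : rat) \is a Num.int.
  by move=> n; rewrite -[n%:R]/((n%:Z)%:~R); exact: intr_int.
rewrite mulrBl; apply: rpredB; last by apply: rpredM => //; exact: frac_int.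
rewrite /u mulrBl expnD natrM; apply: rpredB.
  by rewrite mulrA; apply: rpredM.
by rewrite [(p ^ a)%:R * _]mulrC mulrA; apply: rpredM.
Qed.

Definition primes_t : Type := {p : nat | prime p}.

Lemma pruefer_prod_closed :
  zclosed (fun f : primes_t -> qz => forall p : primes_t, in_pruefer (sval p) (f p)).
Proof.
split=> [p | f g hf hg p]; first exact: (zcl0 (pruefer_closed (sval p))).
exact: (zclB (pruefer_closed (sval p)) (hf p) (hg p)).
Qed.

Definition PrueferProd : zmodType := subg pruefer_prod_closed.

Definition dual (A : zmodType) : zmodType := Hom A PrueferProd.

Lemma comp_zmod_morphism (A B C : zmodType) (f : A -> B) (g : B -> C) :
  GRing.zmod_morphism f -> GRing.zmod_morphism g -> GRing.zmod_morphism (g \o f).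
Proof. by move=> hf hg x y /=; rewrite hf hg. Qed.

Definition dualmap (A B : zmodType) (f : A -> B) (hf : GRing.zmod_morphism f)
  (g : dual B) : dual A :=
  @SubG _ _ (hom_closed A PrueferProd) (sgval g \o f)
        (comp_zmod_morphism hf (sgprop g)).

Definition genM (q : rat) : Prop :=
  exists s : seq (int * nat),
    all (fun x => prime x.2) s /\ q = \sum_(x <- s) (x.1)%:~R / (x.2)%:R.

Lemma genM_closed : zclosed genM.
Proof.
split; first by exists [::]; rewrite big_nil.
move=> x y [s [hs ->]] [t [ht ->]].
exists (s ++ map (fun z => (- z.1, z.2)) t); split.
  by rewrite all_cat hs /= all_map.
rewrite big_cat big_map /= -sumrN; congr (_ + _); apply: eq_bigr => z _.
by rewrite intrN mulNr.
Qed.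

Definition Mgrp : zmodType := subg genM_closed.

Definition epi_ab (A B : Type) (f : A -> B) : Prop := forall y, exists x, f x = y.

Definition isoAb (A B : zmodType) : Prop :=
  exists f : A -> B, GRing.zmod_morphism f /\ bijective f.

Definition free_ab (F : zmodType) : Prop :=
  exists (I : Type) (b : I -> F),
    forall (G : zmodType) (g : I -> G),
      exists! f : F -> G, GRing.zmod_morphism f /\ forall i, f (b i) = g i.

Definition injective_ab (Q : zmodType) : Prop :=
  forall (A B : zmodType) (i : A -> B) (g : A -> Q),
    GRing.zmod_morphism i -> injective i -> GRing.zmod_morphism g ->
    exists h : B -> Q, GRing.zmod_morphism h /\ forall a, h (i a) = g a.

Definition projective_ab (P : zmodType) : Prop :=
  forall (A B : zmodType) (q : A -> B) (g : P -> B),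
    GRing.zmod_morphism q -> epi_ab q -> GRing.zmod_morphism g ->
    exists h : P -> A, GRing.zmod_morphism h /\ forall x, q (h x) = g x.

(* Cogen(T): X embeds in a direct product T^I, i.e. there is a family of
   homomorphisms X -> T which is jointly injective *)
Definition Cogen (T X : zmodType) : Prop :=
  exists (I : Type) (f : I -> X -> T),
    (forall i, GRing.zmod_morphism (f i)) /\
    (forall x y, (forall i, f i x = f i y) -> x = y).

Definition B_class (Q0 Q1 : zmodType) (zeta : Q0 -> Q1) (X : zmodType) : Prop :=
  forall g : X -> Q1, GRing.zmod_morphism g ->
    exists h : X -> Q0, GRing.zmod_morphism h /\ forall x, zeta (h x) = g x.

Definition inj_copresentation (T Q0 Q1 : zmodType) (iota : T -> Q0)
  (zeta : Q0 -> Q1) : Prop :=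
  [/\ GRing.zmod_morphism iota, GRing.zmod_morphism zeta, injective iota,
      (forall y, zeta y = 0 <-> exists t, iota t = y) &
      injective_ab Q0 /\ injective_ab Q1].

Definition cosilting_wrt (T Q0 Q1 : zmodType) (iota : T -> Q0)
  (zeta : Q0 -> Q1) : Prop :=
  inj_copresentation iota zeta /\
  forall X : zmodType, Cogen T X <-> B_class zeta X.

Definition proj_presentation (P1 P0 N : zmodType) (sigma : P1 -> P0) : Prop :=
  [/\ projective_ab P1, projective_ab P0, GRing.zmod_morphism sigma &
      exists pi : P0 -> N, [/\ GRing.zmod_morphism pi, epi_ab pi &
                               forall y, pi y = 0 <-> exists x, sigma x = y]].

Definition D_class (P1 P0 : zmodType) (sigma : P1 -> P0) (Y : zmodType) : Prop :=
  forall h : P1 -> Y, GRing.zmod_morphism h ->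
    exists g : P0 -> Y, GRing.zmod_morphism g /\ forall x, g (sigma x) = h x.

Definition is_dsum (I : Type) (Y : I -> zmodType) (S : zmodType)
  (inj : forall i, Y i -> S) : Prop :=
  (forall i, GRing.zmod_morphism (inj i)) /\
  forall (G : zmodType) (g : forall i, Y i -> G),
    (forall i, GRing.zmod_morphism (g i)) ->
    exists! u : S -> G, GRing.zmod_morphism u /\
                        forall i (y : Y i), u (inj i y) = g i y.

Definition closed_dsums (C : zmodType -> Prop) : Prop :=
  forall (I : Type) (Y : I -> zmodType) (S : zmodType) (inj : forall i, Y i -> S),
    is_dsum inj -> (forall i, C (Y i)) -> C S.

Definition partial_silting_wrt (N P1 P0 : zmodType) (sigma : P1 -> P0) : Prop :=
  D_class sigma N /\ closed_dsums (D_class sigma).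

(* Ext^1_Z(N, N') computed from a projective (free) resolution
   0 -> F1 --zeta--> F0 -> N -> 0 : it is Hom(F1,N') / image of Hom(zeta,N').
   Ext1_nonzero says this cokernel is nonzero. *)
Definition Ext1_nonzero (F1 F0 N' : zmodType) (zeta : F1 -> F0) : Prop :=
  exists h : F1 -> N', GRing.zmod_morphism h /\
    ~ exists g : F0 -> N', GRing.zmod_morphism g /\ forall x, g (zeta x) = h x.

(* Main.v *)
Require Import Defs.
From HB Require Import structures.
From mathcomp Require Import all_boot all_order all_algebra.
From mathcomp Require Import boolp classical_sets functions.
Import Order.TTheory GRing.Theory Num.Theory.
Local Open Scope ring_scope.
Local Open Scope classical_set_scope.
Notation frac := Defs.frac.
From mathcomp Require Import ring.
Notation Hom := Defs.Hom.
Section Inj.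
Variables (Q : zmodType).
Hypothesis divQ : forall (q : Q) (n : nat), (0 < n)%N -> exists e, e *+ n = q.
Variables (A B : zmodType) (i : A -> B) (g : A -> Q).
Hypotheses (hi : GRing.zmod_morphism i) (ii : injective i) (hg : GRing.zmod_morphism g).

Definition G0 : set (B * Q) := fun z => exists a, z = (i a, g a).

Definition Good (H : set (B * Q)) : Prop :=
  [/\ G0 `<=` H, (forall z w, H z -> H w -> H (z - w)) &
      (forall x d d', H (x, d) -> H (x, d') -> d = d')].

Lemma i0 : i 0 = 0. Proof. by have := hi 0 0; rewrite subrr => ->; rewrite subrr. Qed.
Lemma g0 : g 0 = 0. Proof. by have := hg 0 0; rewrite subrr => ->; rewrite subrr. Qed.

Lemma Good_G0 : Good G0.
Proof.
split=> //.
- by move=> _ _ [a ->] [b ->]; exists (a - b); rewrite /= hi hg.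
- move=> x d d' [a [Ex Ed]] [b [Ex' Ed']]; rewrite Ed Ed'; congr g; apply: ii.
  by rewrite -Ex -Ex'.
Qed.

Lemma Good0 {H} : Good H -> H (0, 0).
Proof. by case=> sG _ _; apply: sG; exists 0; rewrite i0 g0. Qed.

Lemma GoodN {H z} : Good H -> H z -> H (- z).
Proof. by move=> gH hz; case: (gH) => _ sb _; rewrite -sub0r; apply: sb => //; exact: Good0. Qed.

Lemma GoodD {H z w} : Good H -> H z -> H w -> H (z + w).
Proof. by move=> gH hz hw; case: (gH) => _ sb _; rewrite -[w]opprK; apply: sb => //; exact: GoodN. Qed.

Lemma Good_mulz {H x d} k : Good H -> H (x, d) -> H (x *~ k, d *~ k).
Proof.
move=> gH hxd.
have hn : forall n : nat, H (x *+ n, d *+ n).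
  elim=> [|n IH]; first by rewrite !mulr0n; exact: Good0.
  rewrite !mulrS; have h := GoodD gH hxd IH; exact h.
case: k => n; first exact: hn.
rewrite NegzE !mulrNz; have h := GoodN gH (hn n.+1); exact h.
Qed.

Definition PP (X : set (B * Q)) : Prop := Good (X `|` G0).

Lemma chainP (F : set (set (B * Q))) : F `<=` PP -> total_on F subset ->
  PP (\bigcup_(X in F) X).
Proof.
move=> FP tot.
set U := (\bigcup_(X in F) X) `|` G0.
have key : forall z w, U z -> U w -> exists Z, [/\ Good Z, Z `<=` U, Z z & Z w].
  move=> z w [[X FX Xz]|Gz] [[Y FY Yw]|Gw].
  - have [XY|YX] := tot _ _ FX FY.
    + exists (Y `|` G0); split; [exact: FP|by move=> u [?|?]; [left; exists Y|right] | left; exact: XY | by left].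
    + exists (X `|` G0); split; [exact: FP|by move=> u [?|?]; [left; exists X|right] | by left | left; exact: YX].
  - exists (X `|` G0); split; [exact: FP|by move=> u [?|?]; [left; exists X|right] | by left | by right].
  - exists (Y `|` G0); split; [exact: FP|by move=> u [?|?]; [left; exists Y|right] | by right | by left].
  - exists G0; split; [exact: Good_G0 | by move=> u ?; right | by [] | by []].
split.
- by move=> u Gu; right.
- move=> z w Uz Uw; have [Z [gZ sZ Zz Zw]] := key z w Uz Uw.
  by apply: sZ; case: gZ => _ sb _; exact: sb.
- move=> x d d' Ud Ud'; have [Z [gZ sZ Zz Zw]] := key _ _ Ud Ud'.
  by case: gZ => _ _ fn; exact: fn Zz Zw.
Qed.

Lemma maximal_full H : Good H -> (forall H', Good H' -> H `<=` H' -> H' `<=` H) ->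
  forall b, exists d, H (b, d).
Proof.
move=> gH mx b; apply: contrapT => nb.
have nb' : forall d, ~ H (b, d) by move=> d hd; apply: nb; exists d.
case: (gH) => sG sb fn.
set Iset := fun k : int => exists d, H (b *~ k, d).
have [e he] : exists e : Q, forall x d x' d' (k k' : int), H (x, d) -> H (x', d') ->
    x + b *~ k = x' + b *~ k' -> d + e *~ k = d' + e *~ k'.
  have keyI : forall x d x' d' (k k' : int), H (x, d) -> H (x', d') ->
      x + b *~ k = x' + b *~ k' -> H (b *~ (k - k'), d' - d).
    move=> x d x' d' k k' h1 h2 E.
    have -> : b *~ (k - k') = x' - x.
      by rewrite mulrzBr -[b *~ k](addKr x) E addrA addrK addrC.
    exact: (sb (x', d') (x, d)).
  case: (pselect (exists k, k != 0 /\ Iset k)) => [[k [k0 [dk hk]]]|nI].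
  - pose PI := fun n : nat => `[< (0 < n)%N /\ Iset n >].
    have exPI : exists n, PI n.
      exists `|k|%N; apply/asboolP; split; first by rewrite absz_gt0.
      case: (ltrP k 0) => kl.
      + exists (- dk); have -> : b *~ `|k|%N = - (b *~ k).
          by rewrite abszE ltr0_norm // mulrNz.
        by have := GoodN gH hk.
      + by exists dk; rewrite abszE ger0_norm.
    case: (find_ex_minn exPI) => n /asboolP [n0 [dn hn]] nmin.
    have [e en] := @divQ dn n n0.
    exists e => x d x' d' k1 k1' h1 h2 E.
    have Hc := keyI _ _ _ _ _ _ h1 h2 E.
    set c := k1 - k1' in Hc.
    have nz : (n%:Z != 0) by rewrite eqz_nat -lt0n.
    have Hq : H (b *~ (((c %/ n)%Z) * n), dn *~ (c %/ n)%Z).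
      by rewrite mulrC mulrzA; exact: (Good_mulz _ gH hn).
    have Hr : H (b *~ (c %% n)%Z, (d' - d) - dn *~ (c %/ n)%Z).
      have h := sb _ _ Hc Hq; move: h.
      have -> : (b *~ c, d' - d) - (b *~ ((c %/ n)%Z * n), dn *~ (c %/ n)%Z) =
         (b *~ (c %% n)%Z, (d' - d) - dn *~ (c %/ n)%Z).
        congr pair; rewrite -mulrzBr; congr (_ *~ _).
      by [].
    have r0 : (c %% n)%Z = 0.
      apply/eqP; apply: contraT => rn.
      have rge := modz_ge0 c nz.
      have rlt : (c %% n)%Z < n by apply: ltz_pmod; rewrite ltz_nat.
      have : (n <= `|(c %% n)%Z|%N)%N.
        apply: nmin; apply/asboolP; split; first by rewrite absz_gt0.
        exists ((d' - d) - dn *~ (c %/ n)%Z); congr (H (_, _)): Hr.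
        by rewrite gez0_abs.
      by rewrite -lez_nat gez0_abs // Order.TotalTheory.leNgt rlt.
    have cE : c = ((c %/ n)%Z * n) by rewrite {1}(divz_eq c n) r0 addr0.
    rewrite -cE in Hq; have Ed := fn _ _ _ Hc Hq.
    have : d' - d = e *~ c by rewrite Ed -en pmulrn -mulrzA mulrC -cE.
    rewrite /c mulrzBr => E2.
    by rewrite -[d'](subrK d) E2 addrAC subrK addrC.
  - exists 0 => x d x' d' k1 k1' h1 h2 E.
    have Hc := keyI _ _ _ _ _ _ h1 h2 E.
    have kk : k1 - k1' = 0.
      apply: contrapT => nz; apply: nI; exists (k1 - k1'); split; first by apply/eqP.
      by exists (d' - d).
    move: Hc; rewrite kk mulr0z => H0.
    have := fn _ _ _ (Good0 gH) H0 => /eqP; rewrite eq_sym subr_eq0 => /eqP ->.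
    by rewrite !mul0rz.
set H' : set (B * Q) := fun z => exists x d (k : int), H (x, d) /\ z = (x + b *~ k, d + e *~ k).
have gH' : Good H'.
  split.
  - move=> z Gz; exists z.1, z.2, 0; split; first by case: z Gz => ? ? ?; exact: sG.
    by case: z {Gz} => ? ?; rewrite !mulr0z !addr0.
  - move=> _ _ [x [d [k [h1 ->]]]] [x' [d' [k' [h2 ->]]]].
    exists (x - x'), (d - d'), (k - k'); split; first exact: (sb (x, d) (x', d')).
    by congr pair; rewrite /= mulrzBr opprD addrACA.
  - move=> y d1 d2 [x [d [k [h1 [E1 E2]]]]] [x' [d' [k' [h2 [E1' E2']]]]].
    by rewrite E2 E2'; apply: (he _ _ _ _ _ _ h1 h2); rewrite -E1 -E1'.
have sH : H `<=` H'.
  by move=> [x d] hxd; exists x, d, 0; rewrite !mulr0z !addr0.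
have : H' (b, e).
  by exists 0, 0, 1; split; [exact: Good0 | rewrite !add0r !mulr1z].
by move=> /(mx _ gH' sH); apply: nb'.
Qed.

Lemma GoodU H : Good H -> Good (H `|` G0).
Proof.
move=> gH; have -> : H `|` G0 = H; last exact: gH.
by apply/seteqP; split => u; [case=> //; case: gH => s _ _; exact: s | by left].
Qed.

Lemma extend_exists : exists h : B -> Q, GRing.zmod_morphism h /\ forall a, h (i a) = g a.
Proof.
have [X [PX Xmax]] := Zorn_bigcup chainP.
set H := X `|` G0.
have mx : forall H', Good H' -> H `<=` H' -> H' `<=` H.
  move=> H' gH' sH' z H'z; apply: contrapT => nz.
  apply: (Xmax H'); last exact: GoodU.
  split; first by move=> u Xu; apply: sH'; left.
  by move=> /(_ z H'z) Xz; apply: nz; left.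
have gH : Good H := PX.
have full := @maximal_full H gH mx.
have [h hh] := choice full.
exists h; split.
- move=> x y; case: gH => _ sb fn.
  apply: (fn (x - y)); first exact: hh.
  exact (sb (x, h x) (y, h y) (hh x) (hh y)).
- move=> a; case: gH => sG _ fn; apply: (fn (i a)); first exact: hh.
  by apply: sG; exists a.
Qed.
End Inj.

Lemma divisible_injective (Q : zmodType) :
  (forall (q : Q) (n : nat), (0 < n)%N -> exists e, e *+ n = q) -> injective_ab Q.
Proof. by move=> divQ A B i g hi ii hg; exact: extend_exists. Qed.
Lemma frac_int_shift (x : rat) (z : int) : frac (x + z%:~R) = frac x.
Proof. exact: fracDz. Qed.

Lemma natr_int (n : nat) : (n%:R : rat) \is a Num.int.
Proof. by rewrite -[n%:R]/((n%:Z)%:~R); exact: intr_int. Qed.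

Lemma div_pruefer_rat (p : nat) (x : rat) (n : nat) : prime p -> (0 < n)%N ->
  (exists k, x * (p ^ k)%:R \is a Num.int) ->
  exists y, (0 <= y < 1) /\ (exists j, y * (p ^ j)%:R \is a Num.int) /\
            frac (y * n%:R) = frac x.
Proof.
move=> pp n0 [k /intrP [z Hz]].
have [m cpm En] := pfactor_coprime pp n0.
set s := logn p n in En.
have cz : coprimez m%:Z (p ^ k)%:Z.
  by rewrite coprimezE /= coprime_sym; apply: coprimeXl.
have [[u v] /= Euv] := coprimezP _ _ cz.
have p0 : (0 < p)%N := prime_gt0 pp.
have pk0 : ((p ^ k)%:R : rat) != 0 by rewrite pnatr_eq0 -lt0n expn_gt0 p0.
have ps0 : ((p ^ s)%:R : rat) != 0 by rewrite pnatr_eq0 -lt0n expn_gt0 p0.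
set w : rat := (u * z)%:~R / ((p ^ k)%:R * (p ^ s)%:R).
exists (frac w); split; first exact: frac_range.
split.
  exists (k + s)%N; rewrite /frac mulrBl expnD natrM; apply: rpredB.
    by rewrite /w mulfVK ?mulf_neq0 // intr_int.
  by rewrite -natrM; apply: rpredM; [exact: intr_int | exact: natr_int].
have -> : frac w * n%:R = w * n%:R + (- (Num.floor w * n%:Z))%:~R.
  by rewrite /frac mulrBl intrN intrM.
rewrite fracDz.
have -> : w * n%:R = x + (- (v * z))%:~R.
  have Ex : x = z%:~R / (p ^ k)%:R by rewrite -Hz mulfK.
  have Eu : (u%:~R : rat) * m%:R = 1 - v%:~R * (p ^ k)%:R.
    have := congr1 (fun t : int => (t%:~R : rat)) Euv.
    rewrite /= intrD !intrM => E1.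
    have E2 : (u%:~R * m%:R + v%:~R * (p ^ k)%:R : rat) = 1 := E1.
    by apply/eqP; rewrite eq_sym subr_eq E2.
  rewrite Ex /w En natrM intrN intrM.
  rewrite intrM.
  transitivity ((u%:~R * m%:R) * z%:~R / (p ^ k)%:R : rat); first by field; rewrite ps0 pk0.
  by rewrite Eu; field.
by rewrite fracDz.
Qed.
Lemma qval_add (x y : qz) : qval (x + y) = frac (qval x + qval y).
Proof. by []. Qed.

Lemma qval0 : qval (0 : qz) = 0. Proof. by []. Qed.

Lemma frac_frac x : frac (frac x) = frac x.
Proof. by have := fracDl x 0; rewrite !addr0. Qed.

Lemma fracDr x y : frac (x + frac y) = frac (x + y).
Proof. by rewrite addrC fracDl addrC. Qed.

Lemma qz_muln (x : qz) n : qval (x *+ n) = frac (qval x * n%:R).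
Proof.
elim: n => [|n IH]; first by rewrite mulr0n mulr0 qval0 frac_id // lexx ltr01.
by rewrite mulrS qval_add IH fracDr mulrS mulrDr mulr1.
Qed.

Lemma sgval_add (V : zmodType) (P : V -> Prop) (h : zclosed P) (x y : subg h) :
  sgval (x + y) = sgval x + sgval y.
Proof. by []. Qed.
Lemma sgval0 (V : zmodType) (P : V -> Prop) (h : zclosed P) :
  sgval (0 : subg h) = 0.
Proof. by []. Qed.
Lemma sgval_opp (V : zmodType) (P : V -> Prop) (h : zclosed P) (x : subg h) :
  sgval (- x) = - sgval x.
Proof. by []. Qed.
Lemma sgval_sub (V : zmodType) (P : V -> Prop) (h : zclosed P) (x y : subg h) :
  sgval (x - y) = sgval x - sgval y.
Proof. by []. Qed.

Lemma sgval_muln (V : zmodType) (P : V -> Prop) (h : zclosed P) (x : subg h) n :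
  sgval (x *+ n) = sgval x *+ n.
Proof. by elim: n => [|n IH]; rewrite ?mulr0n // !mulrS sgval_add IH. Qed.

Lemma fun_muln (T : Type) (V : zmodType) (f : T -> V) n t : (f *+ n) t = f t *+ n.
Proof. by elim: n => [|n IH]; rewrite ?mulr0n // !mulrS -IH. Qed.

Lemma divisible_D (d : PrueferProd) (n : nat) : (0 < n)%N -> exists e, e *+ n = d.
Proof.
move=> n0.
have H : forall p : primes_t, exists e : qz, in_pruefer (sval p) e /\ e *+ n = sgval d p.
  move=> p; have [y [yr [[j hj] hy]]] := @div_pruefer_rat _ _ _ (svalP p) n0 (sgprop d p).
  exists (QZ yr); split; first by exists j.
  apply: qz_inj; rewrite qz_muln /= hy frac_id //; exact: qprop.
have [f hf] := choice H.
exists (@SubG _ _ pruefer_prod_closed f (fun p => (hf p).1)).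
apply: subg_inj; rewrite sgval_muln /=; apply: funext => p.
by rewrite fun_muln (hf p).2.
Qed.

Lemma injective_D : injective_ab PrueferProd.
Proof. apply: divisible_injective => q n; exact: divisible_D. Qed.
Lemma zm0 {A B : zmodType} {f : A -> B} : GRing.zmod_morphism f -> f 0 = 0.
Proof. by move=> hf; have := hf 0 0; rewrite subrr => ->; rewrite subrr. Qed.

Lemma zmN {A B : zmodType} {f : A -> B} : GRing.zmod_morphism f -> forall x, f (- x) = - f x.
Proof. by move=> hf x; rewrite -sub0r hf (zm0 hf) sub0r. Qed.

Lemma zmD {A B : zmodType} {f : A -> B} : GRing.zmod_morphism f -> forall x y, f (x + y) = f x + f y.
Proof. by move=> hf x y; rewrite -[y in LHS]opprK hf (zmN hf) opprK. Qed.

Lemma zm_muln {A B : zmodType} {f : A -> B} : GRing.zmod_morphism f -> forall x n, f (x *+ n) = f x *+ n.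
Proof.
move=> hf x; elim=> [|n IH]; first by rewrite !mulr0n (zm0 hf).
by rewrite !mulrS (zmD hf) IH.
Qed.

Lemma zm_mulz {A B : zmodType} {f : A -> B} : GRing.zmod_morphism f -> forall x k, f (x *~ k) = f x *~ k.
Proof.
move=> hf x [n|n]; first by rewrite -!pmulrn (zm_muln hf).
by rewrite NegzE !mulrNz (zmN hf) -!pmulrn (zm_muln hf).
Qed.

Lemma free_lift (F A B : zmodType) (q : A -> B) (g : F -> B) :
  free_ab F -> GRing.zmod_morphism q -> epi_ab q -> GRing.zmod_morphism g ->
  exists h : F -> A, GRing.zmod_morphism h /\ forall x, q (h x) = g x.
Proof.
move=> [I [b Hb]] hq eq hg.
have [a ha] := choice (fun i => eq (g (b i))).
have [h [[hh hb] _]] := Hb A a.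
exists h; split => // x.
have [f [_ uf]] := Hb B (fun i => g (b i)).
have E1 : f = q \o h.
  apply: uf; split; first exact: comp_zmod_morphism.
  by move=> i /=; rewrite hb ha.
have E2 : f = g by apply: uf.
by have := congr1 (fun t => t x) (etrans (esym E1) E2).
Qed.

Lemma free_unique {F G : zmodType} {I : Type} {b : I -> F} :
  (forall (G : zmodType) (g : I -> G),
      exists! f : F -> G, GRing.zmod_morphism f /\ forall i, f (b i) = g i) ->
  forall f1 f2 : F -> G, GRing.zmod_morphism f1 -> GRing.zmod_morphism f2 ->
  (forall i, f1 (b i) = f2 (b i)) -> f1 = f2.
Proof.
move=> Hb f1 f2 h1 h2 e.
have [f [_ uf]] := Hb G (fun i => f2 (b i)).
by rewrite -(uf f1 (conj h1 e)) -(uf f2 (conj h2 (fun i => erefl))).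
Qed.

Definition mkHom {A B : zmodType} {f : A -> B} (hf : GRing.zmod_morphism f) : Hom A B :=
  @SubG _ _ (hom_closed A B) f hf.

Lemma Hom_ext (A B : zmodType) (f g : Hom A B) : (forall x, sgval f x = sgval g x) -> f = g.
Proof. by move=> e; apply: subg_inj; apply: funext. Qed.

Lemma Hom_sub (A B : zmodType) (f g : Hom A B) x : sgval (f - g) x = sgval f x - sgval g x.
Proof. by []. Qed.

Lemma free_hom_injective (F Q : zmodType) : free_ab F -> injective_ab Q -> injective_ab (Hom F Q).
Proof.
move=> [I [b Hb]] iQ A B i g hi ii hg.
have hgj : forall j, GRing.zmod_morphism (fun a => sgval (g a) (b j)).
  by move=> j x y; rewrite hg Hom_sub.
have [hj Hj] := choice (fun j => iQ A B i _ hi ii (hgj j)).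
have ex : forall x : B, exists phi : F -> Q, GRing.zmod_morphism phi /\ forall j, phi (b j) = hj j x.
  by move=> x; have [f [Pf _]] := Hb Q (fun j => hj j x); exists f.
have [phi Hphi] := choice ex.
exists (fun x => mkHom (Hphi x).1); split.
- move=> x y; apply: subg_inj => /=.
  apply: (free_unique Hb) => //.
  + exact: (Hphi (x - y)).1.
  + exact: (zclB (hom_closed F Q) (Hphi x).1 (Hphi y).1).
  + move=> j; rewrite (Hphi (x - y)).2.
    have -> : (phi x - phi y) (b j) = phi x (b j) - phi y (b j) by [].
    by rewrite (Hphi x).2 (Hphi y).2 ((Hj j).1).
- move=> a; apply: subg_inj => /=.
  apply: (free_unique Hb) => //; first exact: (Hphi (i a)).1.
    exact: sgprop.
  by move=> j; rewrite (Hphi (i a)).2 (Hj j).2.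
Qed.

Lemma iso_injective (X Y : zmodType) (phi : X -> Y) :
  GRing.zmod_morphism phi -> bijective phi -> injective_ab X -> injective_ab Y.
Proof.
move=> hphi [psi K1 K2] iX A B i g hi ii hg.
have hpsi : GRing.zmod_morphism psi.
  by move=> x y; apply: (can_inj K1); rewrite hphi !K2.
have [h [hh eh]] := iX A B i (psi \o g) hi ii (comp_zmod_morphism hg hpsi).
exists (phi \o h); split; first exact: comp_zmod_morphism.
by move=> a /=; rewrite eh /= K2.
Qed.

Lemma factor_coker (P1 P0 N G : zmodType) (sigma : P1 -> P0) (pi : P0 -> N) (y : P0 -> G) :
  GRing.zmod_morphism pi -> epi_ab pi -> (forall u, pi u = 0 <-> exists x, sigma x = u) ->
  GRing.zmod_morphism y -> (forall x, y (sigma x) = 0) ->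
  exists t : N -> G, GRing.zmod_morphism t /\ forall u, t (pi u) = y u.
Proof.
move=> hpi epi ker hy y0.
have [s hs] := choice epi.
have key : forall u v, pi u = pi v -> y u = y v.
  move=> u v e; apply/eqP; rewrite -subr_eq0 -hy; apply/eqP.
  have : pi (u - v) = 0 by rewrite hpi e subrr.
  by move=> /ker [x <-]; exact: y0.
exists (y \o s); split.
- move=> a b /=; rewrite -hy; apply: key.
  by rewrite !hpi !hs.
- by move=> u /=; apply: key; rewrite hs.
Qed.
Lemma subrACA (V : zmodType) (x y z w : V) : (x - y) - (z - w) = (x - z) - (y - w).
Proof. by rewrite !opprB addrACA [- y + _]addrC addrACA. Qed.

Lemma bclass_all (T Q0 Q1 X : zmodType) (iota : T -> Q0) (zeta : Q0 -> Q1) :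
  GRing.zmod_morphism iota -> GRing.zmod_morphism zeta -> injective iota ->
  (forall y, zeta y = 0 <-> exists t, iota t = y) -> epi_ab zeta -> injective_ab T ->
  B_class zeta X.
Proof.
move=> hi hz ii ker ez iT.
have [r [hr er]] := iT T Q0 iota id hi ii (fun x y => erefl).
have [c hc] := choice ez.
pose s := fun y => c y - iota (r (c y)).
have zs : forall y, zeta (s y) = y.
  move=> y; rewrite /s hz hc.
  have -> : zeta (iota (r (c y))) = 0 by apply/ker; eexists.
  by rewrite subr0.
have hs : GRing.zmod_morphism s.
  move=> y1 y2.
  set w := c (y1 - y2) - (c y1 - c y2).
  have : zeta w = 0 by rewrite /w !hz !hc subrr.
  move=> /ker [t et].
  have : w - iota (r w) = 0 by rewrite -et er subrr.
  rewrite /s /w !hr !hi => E.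
  by move/eqP: E; rewrite subrACA subr_eq0 => /eqP ->; rewrite subrACA.
move=> g hg; exists (s \o g); split; first exact: comp_zmod_morphism.
by move=> x /=; rewrite zs.
Qed.
Lemma gelt_proof (n : nat) : genM (if prime n then n%:R^-1 else 0).
Proof.
case: ifP => pn.
  by exists [:: (1%:Z, n)]; rewrite /= pn big_cons big_nil addr0 mul1r.
by exists [::]; rewrite big_nil.
Qed.

Definition gelt (n : nat) : Mgrp := @SubG _ _ genM_closed _ (gelt_proof n).

Lemma gelt_val (p : nat) : prime p -> sgval (gelt p) = p%:R^-1.
Proof. by move=> pp; rewrite /= pp. Qed.

Lemma sgval_mulz (V : zmodType) (P : V -> Prop) (h : zclosed P) (x : subg h) k :
  sgval (x *~ k) = sgval x *~ k.
Proof.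
case: k => n; first by rewrite -!pmulrn sgval_muln.
by rewrite NegzE !mulrNz sgval_opp -!pmulrn sgval_muln.
Qed.

Lemma closure_lemmas (G : zmodType) (P : G -> Prop) : P 0 -> (forall x y, P x -> P y -> P (x - y)) ->
  (forall x y, P x -> P y -> P (x + y)) /\ (forall x k, P x -> P (x *~ k)).
Proof.
move=> P0 Ps.
have PN : forall x, P x -> P (- x) by move=> x px; rewrite -sub0r; apply: Ps.
have PD : forall x y, P x -> P y -> P (x + y).
  by move=> x y px py; rewrite -[y]opprK; apply: Ps => //; apply: PN.
split => // x k px.
have Pn : forall n : nat, P (x *+ n).
  by elim=> [|n IH]; rewrite ?mulr0n // mulrS; apply: PD.
case: k => n; first by rewrite -pmulrn.
by rewrite NegzE mulrNz; apply: PN; rewrite -pmulrn.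
Qed.

Lemma Mgrp_ind (P : Mgrp -> Prop) : P 0 -> (forall x y, P x -> P y -> P (x - y)) ->
  (forall p, prime p -> P (gelt p)) -> forall m, P m.
Proof.
move=> P0 Ps Pg; have [PD PZ] := @closure_lemmas _ P P0 Ps.
move=> m; case: (sgprop m) => s [hs Eq].
elim: s m hs Eq => [|[k p] s IH] m hs Eq.
  by have -> : m = 0 by apply: subg_inj; rewrite Eq big_nil.
move: hs => /= /andP [pp hs].
have gm : genM (\sum_(x <- s) (x.1)%:~R / (x.2)%:R) by exists s.
have -> : m = gelt p *~ k + SubG genM_closed gm.
  apply: subg_inj; rewrite sgval_add sgval_mulz gelt_val //= Eq big_cons /=.
  by congr (_ + _); rewrite mulrC mulrzr.
apply: PD; first by apply: PZ; apply: Pg.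
exact: IH.
Qed.
Notation dual := Defs.dual.

Definition Phi (f : dual Mgrp) : PrueferProd :=
  @SubG _ _ pruefer_prod_closed (fun p => sgval (sgval f (gelt (sval p))) p)
        (fun p => sgprop (sgval f (gelt (sval p))) p).

Lemma Phi_morph : GRing.zmod_morphism Phi.
Proof. by move=> f g; apply: subg_inj; apply: funext => p. Qed.

Lemma int01 (x : rat) : x \is a Num.int -> 0 <= x < 1 -> x = 0.
Proof.
move=> /intrP [m ->] /andP [h1 h2].
move: h1 h2; rewrite ler0z ltrz1 => h1 h2.
have -> : m = 0 by apply/eqP; rewrite eq_le h1 -ltzD1 add0r h2.
by [].
Qed.

Lemma pruefer_coprime_tors (p q : nat) (x : qz) : prime q -> coprime q p ->
  in_pruefer p x -> x *+ q = 0 -> x = 0.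
Proof.
move=> pq cqp [k /intrP [z Hz]] xq.
have : qval (x *+ q) = 0 by rewrite xq.
rewrite qz_muln /frac => /eqP; rewrite subr_eq0 => /eqP Ew.
have cz : coprimez q%:Z (p ^ k)%:Z.
  by rewrite coprimezE /=; apply: coprimeXr.
have [[u v] /= Euv] := coprimezP _ _ cz.
apply: qz_inj; apply: int01; last exact: qprop.
have E : (u%:~R * q%:R + v%:~R * (p ^ k)%:R : rat) = 1.
  by have := congr1 (fun t : int => (t%:~R : rat)) Euv; rewrite /= intrD !intrM.
rewrite -[qval x]mulr1 -E mulrDr !mulrA ![qval x * _%:~R]mulrC -!mulrA Ew Hz.
by apply: rpredD; apply: rpredM; exact: intr_int.
Qed.

Lemma gelt_mul (p q : nat) : prime p -> prime q -> gelt p *+ p = gelt q *+ q.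
Proof.
move=> pp pq; apply: subg_inj; rewrite !sgval_muln (gelt_val p pp) (gelt_val q pq).
have h : forall n : nat, prime n -> (n%:R : rat)^-1 *+ n = 1.
  move=> n pn; have -> : (n%:R : rat)^-1 *+ n = (n%:R)^-1 * n%:R by rewrite mulr_natr.
  rewrite mulVf //.
  by rewrite pnatr_eq0 -lt0n prime_gt0.
by rewrite (h p pp) (h q pq).
Qed.

Lemma Phi_inj0 (f : dual Mgrp) : Phi f = 0 -> f = 0.
Proof.
move=> Pf.
apply: Hom_ext => m; apply: subg_inj; apply: funext => p.
rewrite [RHS]/=.
set phi := fun m => sgval (sgval f m) p.
have hphi : GRing.zmod_morphism phi.
  by move=> a b; rewrite /phi (sgprop f); reflexivity.
have ep : phi (gelt (sval p)) = 0.
  have h := congr1 (fun d => sgval d p) Pf; exact h.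
have eq : forall q, prime q -> phi (gelt q) = 0.
  move=> q pq; have [-> | nqp] := eqVneq q (sval p); first exact: ep.
  apply: (@pruefer_coprime_tors (sval p) q) => //.
  - by rewrite prime_coprime // dvdn_prime2 // ?(svalP p) // eq_sym.
  - exact: (sgprop (sgval f (gelt q)) p).
  - by rewrite -(zm_muln hphi) (gelt_mul _ _ pq (svalP p)) (zm_muln hphi) ep mul0rn.
have : phi m = 0.
  apply: (@Mgrp_ind (fun m => phi m = 0)) => //; first exact: (zm0 hphi).
  by move=> x y hx hy; rewrite hphi hx hy subrr.
by move=> h; exact: h.
Qed.

Lemma Phi_inj : injective Phi.
Proof.
move=> f g E; apply/eqP; rewrite -subr_eq0; apply/eqP; apply: Phi_inj0.
by rewrite Phi_morph E subrr.
Qed.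

Lemma Phi_surj (injD : injective_ab PrueferProd) : forall d, exists f, Phi f = d.
Proof.
move=> d.
have ex : forall p : primes_t, exists g : Mgrp -> PrueferProd,
    GRing.zmod_morphism g /\ g (gelt (sval p)) = d.
  move=> p.
  have hi : GRing.zmod_morphism (fun k : int => gelt (sval p) *~ k).
    by move=> a b /=; rewrite mulrzBr.
  have ii : injective (fun k : int => gelt (sval p) *~ k).
    have ev : forall c : int, sgval (gelt (sval p) *~ c) = (sval p)%:R^-1 * c%:~R.
      by move=> c; rewrite sgval_mulz (gelt_val _ (svalP p)) mulrzr.
    move=> a b /= E; have := congr1 (@sgval _ _ genM_closed) E.
    rewrite !ev.
    have nz : ((sval p)%:R : rat)^-1 != 0.
      by rewrite invr_eq0 pnatr_eq0 -lt0n (prime_gt0 (svalP p)).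
    by move=> /(mulfI nz) /intr_inj.
  have hg : GRing.zmod_morphism (fun k : int => d *~ k).
    by move=> a b /=; rewrite mulrzBr.
  have [g [hg' eg]] := injD _ _ _ _ hi ii hg.
  exists g; split => //.
  by have := eg 1; rewrite !mulr1z.
have [g hg] := choice ex.
pose fm := fun m : Mgrp => @SubG _ _ pruefer_prod_closed (fun p => sgval (g p m) p)
                                 (fun p => sgprop (g p m) p).
have hfm : GRing.zmod_morphism fm.
  move=> a b; apply: subg_inj; apply: funext => p /=.
  by rewrite (hg p).1.
exists (mkHom hfm); apply: subg_inj; apply: funext => p /=.
by rewrite (hg p).2.
Qed.
Lemma qinv_range (p : nat) : prime p -> 0 <= (p%:R : rat)^-1 < 1.
Proof.
move=> pp; have p1 : (1 < p)%N := prime_gt1 pp.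
rewrite invr_ge0 ler0n /= invf_lt1 ?ltr1n //.
by rewrite ltr0n (ltn_trans _ p1).
Qed.

Definition qinv (p : primes_t) : qz := QZ (@qinv_range _ (svalP p)).

Lemma delta_proof (p : primes_t) :
  forall q : primes_t, in_pruefer (sval q) (if q == p then qinv p else 0).
Proof.
move=> q; case: eqP => [->|_].
  exists 1%N; rewrite /= expn1 mulVf; first exact: (@intr_int _ 1).
  by rewrite pnatr_eq0 -lt0n (prime_gt0 (svalP p)).
by exists 0%N; rewrite /= mul0r; exact: (@intr_int _ 0).
Qed.

Definition delta (p : primes_t) : PrueferProd := @SubG _ _ pruefer_prod_closed _ (delta_proof p).

Lemma delta_tors (p : primes_t) : delta p *+ sval p = 0.
Proof.
apply: subg_inj; rewrite sgval_muln; apply: funext => q.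
rewrite fun_muln /=; case: eqP => _; last by rewrite mul0rn.
apply: qz_inj; rewrite qz_muln /= mulVf; first by rewrite /frac floor1 subrr.
by rewrite pnatr_eq0 -lt0n (prime_gt0 (svalP p)).
Qed.

Lemma delta_neq0 (p : primes_t) : delta p != 0.
Proof.
apply/eqP => E; have := congr1 (fun d => qval (sgval d p)) E; rewrite /= eqxx /=.
move/eqP; rewrite invr_eq0 pnatr_eq0 => /eqP p0.
by move: (prime_gt0 (svalP p)); rewrite p0.
Qed.

Lemma delta_mulz (p : primes_t) (k : int) : ((sval p)%:Z %| k)%Z -> delta p *~ k = 0.
Proof.
move=> /dvdzP [j ->]; rewrite mulrC mulrzA -pmulrn delta_tors.
by rewrite mul0rz.
Qed.

Lemma order_div (G : zmodType) (x : G) (n : nat) : (0 < n)%N -> x *+ n = 0 ->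
  (forall m, (0 < m)%N -> x *+ m = 0 -> (n <= m)%N) ->
  forall k : int, x *~ k = 0 -> (n%:Z %| k)%Z.
Proof.
move=> n0 xn nmin k xk.
have nz : (n%:Z != 0) by rewrite eqz_nat -lt0n.
have xr : x *~ (k %% n)%Z = 0.
  have E : (k %% n)%Z = k - (k %/ n)%Z * n by rewrite {2}(divz_eq k n) addrC addKr.
  by rewrite E mulrzBr xk mulrC mulrzA -pmulrn xn mul0rz subrr.
have rge := modz_ge0 k nz.
apply/dvdz_mod0P; apply/eqP; apply: contraT => rn.
have : (n <= `|(k %% n)%Z|%N)%N.
  apply: nmin; first by rewrite absz_gt0.
  by rewrite pmulrn gez0_abs.
have rlt : (k %% n)%Z < n by apply: ltz_pmod; rewrite ltz_nat.
by rewrite -lez_nat gez0_abs // leNgt rlt.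
Qed.

Lemma separate (injD : injective_ab PrueferProd) (X : zmodType) (x : X) : x != 0 ->
  exists chi : X -> PrueferProd, GRing.zmod_morphism chi /\ chi x != 0.
Proof.
move=> x0.
have [d [d0 W]] : exists d : PrueferProd, d != 0 /\ forall k : int, x *~ k = 0 -> d *~ k = 0.
  case: (pselect (exists k : int, k != 0 /\ x *~ k = 0)) => [[k [k0 xk]]|nk].
  - pose PI := fun n : nat => `[< (0 < n)%N /\ x *+ n = 0 >].
    have exPI : exists n, PI n.
      exists `|k|%N; apply/asboolP; split; first by rewrite absz_gt0.
      rewrite pmulrn abszE; case: (ltrP k 0) => kl.
      + by rewrite ltr0_norm // mulrNz xk oppr0.
      + by rewrite ger0_norm.
    case: (find_ex_minn exPI) => n /asboolP [n0 xn] nmin.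
    have nmin' : forall m, (0 < m)%N -> x *+ m = 0 -> (n <= m)%N.
      by move=> m m0 xm; apply: nmin; apply/asboolP.
    have n1 : (1 < n)%N.
      rewrite ltn_neqAle n0 andbT; apply/eqP => n1; move: xn; rewrite -n1 mulr1n.
      by move/eqP; rewrite (negbTE x0).
    pose p : primes_t := exist _ (pdiv n) (pdiv_prime n1).
    exists (delta p); split; first exact: delta_neq0.
    move=> j xj; apply: delta_mulz.
    have := @order_div _ _ _ n0 xn nmin' j xj.
    apply: dvdz_trans; rewrite dvdzE /=; exact: pdiv_dvd.
  - pose p2 : primes_t := exist _ 2%N (isT : prime 2).
    exists (delta p2); split; first exact: delta_neq0.
    move=> j xj; have -> : j = 0; last by rewrite mulr0z.
    by apply: contrapT => jn; apply: nk; exists j; split => //; apply/eqP.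
have Ccl : zclosed (fun y : X => exists k : int, y = x *~ k).
  split; first by exists 0; rewrite mulr0z.
  by move=> _ _ [a ->] [b ->]; exists (a - b); rewrite mulrzBr.
pose A := subg Ccl.
have [kk hkk] := choice (fun y : A => sgprop y).
have wd : forall a b : int, x *~ a = x *~ b -> d *~ a = d *~ b.
  move=> a b E; apply/eqP; rewrite -subr_eq0 -mulrzBr; apply/eqP; apply: W.
  by rewrite mulrzBr E subrr.
pose g := fun y : A => d *~ kk y.
have hg : GRing.zmod_morphism g.
  move=> y z; rewrite /g -mulrzBr; apply: wd.
  by rewrite mulrzBr -!hkk.
have hi : GRing.zmod_morphism (@sgval _ _ Ccl) by [].
have ii : injective (@sgval _ _ Ccl) by move=> ? ?; apply: subg_inj.
have [chi [hchi echi]] := injD A X _ g hi ii hg.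
exists chi; split => //.
pose xa : A := @SubG _ _ Ccl x (ex_intro _ 1 (esym (mulr1z x))).
have := echi xa; rewrite /= => ->; rewrite /g.
have -> : d *~ kk xa = d *~ 1 by apply: wd; rewrite -hkk mulr1z.
by rewrite mulr1z.
Qed.
Definition Fs (s : seq (int * nat)) : rat := \sum_(x <- s) (x.1)%:~R / (x.2)%:R.
Definition Gs (s : seq (int * nat)) : rat := \sum_(x <- s) (x.1)%:~R / ((x.2)%:R ^+ 2).

Lemma sum_split (s : seq (int * nat)) (p0 : nat) (F : int * nat -> rat) :
  \sum_(x <- s) F x = \sum_(x <- s | x.2 == p0) F x + \sum_(x <- [seq x <- s | x.2 != p0]) F x.
Proof. by rewrite (bigID (fun x => x.2 == p0)) /= big_filter. Qed.

Definition Kp (s : seq (int * nat)) (p0 : nat) : rat := \sum_(x <- s | x.2 == p0) (x.1)%:~R.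

Lemma Kp_int s p0 : Kp s p0 \is a Num.int.
Proof. by apply: rpred_sum => x _; exact: intr_int. Qed.

Lemma Fs_split s p0 : Fs s = Kp s p0 / p0%:R + Fs [seq x <- s | x.2 != p0].
Proof.
rewrite /Fs (sum_split s p0); congr (_ + _).
by rewrite /Kp mulr_suml; apply: eq_bigr => x /eqP ->.
Qed.

Lemma Gs_split s p0 : Gs s = Kp s p0 / p0%:R ^+ 2 + Gs [seq x <- s | x.2 != p0].
Proof.
rewrite /Gs (sum_split s p0); congr (_ + _).
by rewrite /Kp mulr_suml; apply: eq_bigr => x /eqP ->.
Qed.

Lemma den_avoid (p0 : nat) (s : seq (int * nat)) : prime p0 ->
  all (fun x => prime x.2) s -> all (fun x => x.2 != p0) s ->
  exists N : nat, coprime N p0 /\ Fs s * N%:R \is a Num.int.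
Proof.
move=> pp0; elim: s => [|[k p] s IH] /=.
  by move=> _ _; exists 1%N; split; [exact: coprime1n | rewrite /Fs big_nil mul0r; exact: (@intr_int _ 0)].
move=> /andP [pp hs] /andP [np hn].
have [N [cN hN]] := IH hs hn.
exists (p * N)%N; split.
  rewrite coprimeMl cN andbT prime_coprime // dvdn_prime2 //.
rewrite /Fs big_cons /= -/(Fs s) mulrDl natrM.
apply: rpredD.
  rewrite mulrA mulfVK; first by apply: rpredM; [exact: intr_int | exact: natr_int].
  by rewrite pnatr_eq0 -lt0n (prime_gt0 pp).
by rewrite mulrCA; apply: rpredM; [exact: natr_int | exact: hN].
Qed.

Lemma intdiv_coprime (c K : rat) (N p : nat) : c \is a Num.int -> K \is a Num.int ->
  coprime N p -> (c - K / p%:R) * N%:R \is a Num.int -> K / p%:R \is a Num.int.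
Proof.
move=> ci Ki cNp h.
have [-> | p0] := eqVneq p 0%N; first by rewrite invr0 mulr0; exact: (@intr_int _ 0).
have cz : coprimez N%:Z p%:Z by rewrite coprimezE.
have [[u v] /= Euv] := coprimezP _ _ cz.
have E : (u%:~R * N%:R + v%:~R * p%:R : rat) = 1.
  by have := congr1 (fun t : int => (t%:~R : rat)) Euv; rewrite /= intrD !intrM.
have pn : (p%:R : rat) != 0 by rewrite pnatr_eq0.
have -> : K / p%:R = u%:~R * (c * N%:R - (c - K / p%:R) * N%:R) + v%:~R * K.
  transitivity (K / p%:R * (u%:~R * N%:R + v%:~R * p%:R)); first by rewrite E mulr1.
  by field.
apply: rpredD.
  apply: rpredM; first exact: intr_int.
  by apply: rpredB => //; apply: rpredM => //; exact: natr_int.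
by apply: rpredM => //; exact: intr_int.
Qed.

Lemma genM_single (z : int) (p : nat) : prime p -> genM (z%:~R / p%:R).
Proof. by move=> pp; exists [:: (z, p)]; rewrite /= pp big_cons big_nil addr0. Qed.

Lemma all_filter_prime (s : seq (int * nat)) (P : pred (int * nat)) :
  all (fun x => prime x.2) s -> all (fun x => prime x.2) (filter P s).
Proof. by move=> hs; apply/allP => x; rewrite mem_filter => /andP [_ /(allP hs)]. Qed.

Lemma key_sum (s : seq (int * nat)) : all (fun x => prime x.2) s ->
  Fs s \is a Num.int -> genM (Gs s).
Proof.
move: {2}(size s) (leqnn (size s)) => n; elim: n s => [|n IH] s.
  by case: s => // _ _ _; exists [::]; rewrite /Gs !big_nil.
case: s => [|x0 s1] hsz hs hF.
  by exists [::]; rewrite /Gs !big_nil.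
set p0 := x0.2.
have pp0 : prime p0 by case/andP: hs.
set s' := [seq x <- x0 :: s1 | x.2 != p0].
have hs' : all (fun x => prime x.2) s' by exact: all_filter_prime.
have hn' : all (fun x => x.2 != p0) s' by apply: filter_all.
have [N [cN hN]] := @den_avoid _ _ pp0 hs' hn'.
have EF := Fs_split (x0 :: s1) p0; rewrite -/s' in EF.
have EG := Gs_split (x0 :: s1) p0; rewrite -/s' in EG.
have Kdiv : Kp (x0 :: s1) p0 / p0%:R \is a Num.int.
  apply: (@intdiv_coprime _ _ _ _ hF (Kp_int _ _) cN).
  by rewrite EF addrAC subrr add0r.
have Fs'i : Fs s' \is a Num.int.
  have -> : Fs s' = Fs (x0 :: s1) - Kp (x0 :: s1) p0 / p0%:R by rewrite EF addrAC subrr add0r.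
  by apply: rpredB.
have sz' : (size s' <= n)%N.
  rewrite /s' size_filter /= eqxx /= add0n.
  by apply: leq_trans (count_size _ _) _; rewrite -ltnS.
have g' := IH s' sz' hs' Fs'i.
rewrite EG; apply: (zclD genM_closed) => //.
move: Kdiv => /intrP [z Ez].
have -> : Kp (x0 :: s1) p0 / p0%:R ^+ 2 = z%:~R / p0%:R.
  by rewrite -Ez expr2 invfM mulrA.
exact: genM_single.
Qed.

Lemma den_genM (y : rat) (p : nat) : prime p -> genM y ->
  exists N : nat, coprime N p /\ y * p%:R * N%:R \is a Num.int.
Proof.
move=> pp [s [hs ->]].
have hs' : all (fun x => prime x.2) [seq x <- s | x.2 != p] by exact: all_filter_prime.
have [N [cN hN]] := @den_avoid _ _ pp hs' (filter_all _ _).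
exists N; split => //.
have := Fs_split s p; rewrite /Fs => ->; rewrite -/(Fs _).
rewrite mulrDl mulrDl; apply: rpredD.
  rewrite mulfVK; first by apply: rpredM; [exact: Kp_int | exact: natr_int].
  by rewrite pnatr_eq0 -lt0n (prime_gt0 pp).
by rewrite mulrAC; apply: rpredM => //; exact: natr_int.
Qed.

Lemma not_all_genM (r : rat) : ~ (forall p, prime p -> genM (r / p%:R - 1 / (p%:R ^+ 2))).
Proof.
move=> H.
set u := numq r; set v := denq r.
have v0 : 0 < v by exact: denq_gt0.
have [p vp pp] := prime_above `|v|%N.
have [N [cN hN]] := @den_genM _ _ pp (H p pp).
move: hN => /intrP [w Ew].
have pn : (p%:R : rat) != 0 by rewrite pnatr_eq0 -lt0n (prime_gt0 pp).
have vn : (v%:~R : rat) != 0 by rewrite intr_eq0 gt_eqF.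
have ru : r = u%:~R / v%:~R by rewrite divq_num_den.
have E : (v * N%:Z)%:~R = (p%:Z * (u * N%:Z - w * v))%:~R :> rat.
  rewrite !intrM intrB !intrM -Ew ru.
  rewrite -[(N%:Z)%:~R]/(N%:R : rat) -[(p%:Z)%:~R]/(p%:R : rat).
  by field; rewrite vn pn.
have E' : v * N%:Z = p%:Z * (u * N%:Z - w * v) by apply: (intr_inj (R := rat)).
have : (p %| `|v| * N)%N.
  have : (p%:Z %| v * N%:Z)%Z by rewrite E' dvdz_mulr.
  by rewrite dvdzE abszM.
rewrite Euclid_dvdM // => /orP [pv | pN].
  have := dvdn_leq _ pv; rewrite absz_gt0 gt_eqF // => /(_ isT).
  by rewrite leqNgt vp.
by move: cN; rewrite coprime_sym prime_coprime // pN.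
Qed.
Definition PE (z : rat * rat) : Prop :=
  exists s, all (fun x => prime x.2) s /\ z.2 = Fs s /\ genM (z.1 - Gs s).

Definition negs (t : seq (int * nat)) := [seq (- x.1, x.2) | x <- t].

Lemma Fs_cat_neg s t : Fs (s ++ negs t) = Fs s - Fs t.
Proof.
rewrite /Fs big_cat big_map /= -sumrN; congr (_ + _); apply: eq_bigr => x _.
by rewrite intrN mulNr.
Qed.

Lemma Gs_cat_neg s t : Gs (s ++ negs t) = Gs s - Gs t.
Proof.
rewrite /Gs big_cat big_map /= -sumrN; congr (_ + _); apply: eq_bigr => x _.
by rewrite intrN mulNr.
Qed.

Lemma PE_closed : zclosed PE.
Proof.
split.
  exists [::]; split => //; split; first by rewrite /Fs big_nil.
  by rewrite /Gs big_nil subrr; exact: (zcl0 genM_closed).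
move=> [a x] [b y] [s [hs [Ex Ga]]] [t [ht [Ey Gb]]].
exists (s ++ negs t); split.
  by rewrite all_cat hs /= all_map.
split; first by rewrite Fs_cat_neg -Ex -Ey.
rewrite Gs_cat_neg /= subrACA; exact: (zclB genM_closed).
Qed.

Definition Egrp : zmodType := subg PE_closed.

Lemma qE_proof (e : Egrp) : genM (sgval e).2.
Proof. by case: (sgprop e) => s [hs [E _]]; exists s; rewrite E. Qed.

Definition qE (e : Egrp) : Mgrp := @SubG _ _ genM_closed _ (qE_proof e).

Lemma jE_proof (m : Mgrp) : PE (sgval m, 0).
Proof.
exists [::]; split => //; split; first by rewrite /Fs big_nil.
by rewrite /Gs big_nil subr0; exact: sgprop.
Qed.

Definition jE (m : Mgrp) : Egrp := @SubG _ _ PE_closed _ (jE_proof m).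

Lemma qE_morph : GRing.zmod_morphism qE.
Proof. by move=> a b; apply: subg_inj. Qed.

Lemma jE_morph : GRing.zmod_morphism jE.
Proof. by move=> a b; apply: subg_inj => /=; congr pair; rewrite /= subrr. Qed.

Lemma jE_inj : injective jE.
Proof. by move=> a b /(congr1 (fun e => (sgval e).1)) /= E; apply: subg_inj. Qed.

Lemma qE_epi : epi_ab qE.
Proof.
move=> m; have [s [hs Es]] := sgprop m.
have pe : PE (Gs s, sgval m).
  by exists s; split => //; split => //; rewrite subrr; exact: (zcl0 genM_closed).
by exists (@SubG _ _ PE_closed _ pe); apply: subg_inj.
Qed.

Lemma qE_ker (e : Egrp) : qE e = 0 -> exists m, jE m = e.
Proof.
move=> /(congr1 (@sgval _ _ genM_closed)) /= E0.
have [s [hs [Es Ga]]] := sgprop e.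
have gs : genM (Gs s) by apply: key_sum => //; rewrite -Es E0; exact: (@intr_int _ 0).
have ga : genM (sgval e).1.
  by rewrite -[(sgval e).1](subrK (Gs s)); exact: (zclD genM_closed).
exists (@SubG _ _ genM_closed _ ga); apply: subg_inj => /=.
by case: (sgval e) E0 => a x /= ->.
Qed.

Lemma qjE (m : Mgrp) : qE (jE m) = 0.
Proof. by apply: subg_inj. Qed.

Lemma pair_muln (z : rat * rat) n : (z *+ n).1 = z.1 *+ n.
Proof. by elim: n => [|n IH]; rewrite ?mulr0n // !mulrS /= IH. Qed.

Lemma nonsplit (s : Mgrp -> Egrp) : GRing.zmod_morphism s -> ~ (forall m, qE (s m) = m).
Proof.
move=> hs qs.
have s2 : forall m, (sgval (s m)).2 = sgval m.
  by move=> m; have := congr1 (@sgval _ _ genM_closed) (qs m).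
set one := gelt 2 *+ 2.
set r := (sgval (s one)).1.
apply: (not_all_genM r) => p pp.
set a := (sgval (s (gelt p))).1.
have ar : a = r / p%:R.
  have pn : (p%:R : rat) != 0 by rewrite pnatr_eq0 -lt0n (prime_gt0 pp).
  have : a *+ p = r.
    rewrite /a /r -pair_muln -sgval_muln -(zm_muln hs) /one.
    by rewrite (gelt_mul _ _ pp (isT : prime 2)).
  by move=> <-; rewrite -[a *+ p]mulr_natr mulfK.
have [t [ht [Et Ga]]] := sgprop (s (gelt p)).
have E1 : Fs (t ++ [:: (-1, p)]) = 0.
  rewrite /Fs big_cat big_cons big_nil /= -/(Fs t) -Et s2 gelt_val //.
  by rewrite addr0 mulN1r subrr.
have := key_sum (t ++ [:: (-1, p)]).
rewrite all_cat ht /= pp E1 => /(_ isT (@intr_int _ 0)).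
rewrite /Gs big_cat big_cons big_nil /= -/(Gs t) addr0 => Gt.
have -> : r / p%:R - 1 / p%:R ^+ 2 = (a - Gs t) + (Gs t + -1%:~R / p%:R ^+ 2).
  by rewrite ar addrA subrK -mulNr.
exact: (zclD genM_closed).
Qed.

Lemma presentation_no_lift (P1 P0 : zmodType) (sigma : P1 -> P0) (pi : P0 -> Mgrp) :
  GRing.zmod_morphism sigma -> GRing.zmod_morphism pi -> epi_ab pi ->
  (forall y, pi y = 0 <-> exists x, sigma x = y) ->
  (exists g : P0 -> Egrp, GRing.zmod_morphism g /\ forall x, qE (g x) = pi x) ->
  ~ D_class sigma Mgrp.
Proof.
move=> hsig hpi epi ker [g [hg eg]] Dc.
have inker : forall x, exists m, jE m = g (sigma x).
  move=> x; apply: qE_ker; rewrite eg; apply/ker; by exists x.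
have [h eh] := choice inker.
have hh : GRing.zmod_morphism h.
  move=> x y; apply: jE_inj; rewrite jE_morph !eh hsig hg.
  by [].
have [g' [hg' eg']] := Dc h hh.
set y := fun u => g u - jE (g' u).
have hy : GRing.zmod_morphism y.
  move=> u v; rewrite /y hg hg' jE_morph.
  by rewrite subrACA.
have y0 : forall x, y (sigma x) = 0 by move=> x; rewrite /y eg' eh subrr.
have [t [ht et]] := @factor_coker _ _ _ _ sigma pi y hpi epi ker hy y0.
apply: (@nonsplit t ht) => m.
have [u <-] := epi m.
by rewrite et /y qE_morph eg qjE subr0.
Qed.

Local Close Scope classical_set_scope.

Lemma dualmap_morph (A B : zmodType) (f : A -> B) (hf : GRing.zmod_morphism f) :
  GRing.zmod_morphism (dualmap hf).
Proof. by move=> a b; apply: Hom_ext. Qed.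

Theorem mainTheorem10 (F1 F0 : zmodType) (zeta : F1 -> F0) (pi : F0 -> Mgrp)
  (hzeta : GRing.zmod_morphism zeta) (hpi : GRing.zmod_morphism pi) :
  free_ab F1 -> free_ab F0 ->
  injective zeta -> epi_ab pi ->
  (forall y : F0, pi y = 0 <-> exists x : F1, zeta x = y) ->
  [/\ isoAb (dual Mgrp) PrueferProd,
      cosilting_wrt (dualmap hpi) (dualmap hzeta),
      (forall (P1 P0 : zmodType) (sigma : P1 -> P0),
          proj_presentation Mgrp sigma -> ~ partial_silting_wrt Mgrp sigma) &
      Ext1_nonzero Mgrp zeta].
Proof.
move=> fF1 fF0 iz epi ker.
have injD := injective_D.
have [psi hpsi] := choice (Phi_surj injD).
have K1 : cancel Phi psi by move=> f; apply: Phi_inj; rewrite hpsi.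
have Pbij : bijective Phi by exists psi.
have hpsim : GRing.zmod_morphism psi.
  by move=> x y; apply: Phi_inj; rewrite Phi_morph !hpsi.
have psibij : bijective psi by exists Phi.
have injT : injective_ab (dual Mgrp) := @iso_injective _ _ psi hpsim psibij injD.
have pz : forall x, pi (zeta x) = 0 by move=> x; apply/ker; exists x.
split.
- by exists Phi; split; [exact: Phi_morph | exact: Pbij].
- have copres : inj_copresentation (dualmap hpi) (dualmap hzeta).
    split.
    + exact: dualmap_morph.
    + exact: dualmap_morph.
    + move=> a b E; apply: Hom_ext => m; have [u <-] := epi m.
      by have := congr1 (fun f : dual F0 => sgval f u) E.
    + move=> y; split.
      * move=> E.
        have y0 : forall x, sgval y (zeta x) = 0.
          by move=> x; have := congr1 (fun f : dual F1 => sgval f x) E.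
        have [t [ht et]] := @factor_coker _ _ _ _ zeta pi (sgval y) hpi epi ker (sgprop y) y0.
        by exists (mkHom ht); apply: Hom_ext => u /=.
      * move=> [t <-]; apply: Hom_ext => x /=.
        by rewrite pz (zm0 (sgprop t)).
    + by split; apply: free_hom_injective.
  split => // X; split => _.
  + case: copres => hi hz ii kr _.
    apply: (@bclass_all _ _ _ X _ _ hi hz ii kr) => //.
    move=> y; have [h [hh eh]] := injD F1 F0 zeta (sgval y) hzeta iz (sgprop y).
    by exists (mkHom hh); apply: Hom_ext => x /=.
  + exists (Hom X PrueferProd), (fun chi x => psi (sgval chi x)); split.
      by move=> chi; apply: comp_zmod_morphism; [exact: sgprop | exact: hpsim].
    move=> x y E; apply/eqP; rewrite -subr_eq0; apply: contraT => nz.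
    have [chi [hchi cx]] := @separate injD _ _ nz.
    have := E (mkHom hchi) => /= /(can_inj hpsi) => exy.
    by move: cx; rewrite hchi exy subrr eqxx.
- move=> P1 P0 sig [pr1 pr0 hsig [p [hp ep kp]]] [Dc _].
  apply: (@presentation_no_lift P1 P0 sig p hsig hp ep kp _ Dc).
  exact: (pr0 Egrp Mgrp qE p qE_morph qE_epi hp).
- apply: contrapT => nE.
  apply: (@presentation_no_lift F1 F0 zeta pi hzeta hpi epi ker).
    exact: (@free_lift _ _ _ qE pi fF0 qE_morph qE_epi hpi).
  move=> h hh; apply: contrapT => ng; apply: nE; exists h; split => //.
Qed.
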